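(* Let $\mathcal T$ be a finite tree with $|\mathcal T|$ vertices. Then for all $n\ge1$, \[ h_n(W(\mathcal T))\le n^{2|\mathcal T|}\cdot 4^{|\mathcal T| n}\cdot n^{\gamma(\mathcal T) n}. \]
   Context: $W(\mathcal T)$ is the right-angled Coxeter group of $\mathcal T$: generators $\sigma_v$ for the vertices, relations $\sigma_v^2=1$, and $\sigma_v\sigma_w=\sigma_w\sigma_v$ for adjacent $v,w$. $h_n(\Gamma)=|\mathrm{Hom}(\Gamma,\mathrm{Sym}_n)|$. A clique collection is an induced subgraph whose connected components are complete graphs. For components $\mathcal C_1,\dots,\mathcal C_q$ set $w(\mathcal C)=\sum_i(1-2^{-|\mathcal C_i|})$. Then $\gamma(\mathcal T)$ is the maximum of $w$ over all clique collections of $\mathcal T$. *)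

(* Defs.v *)
From HB Require Import structures.
From mathcomp Require Import all_boot all_order all_algebra all_fingroup.
From mathcomp Require Import all_classical all_reals all_analysis.
Set Implicit Arguments. Unset Strict Implicit. Unset Printing Implicit Defensive.
Import Order.TTheory GRing.Theory Num.Theory.
Local Open Scope ring_scope.

Definition simple_graph (T : finType) (e : rel T) : Prop :=
  symmetric e /\ irreflexive e.

Definition acyclic_graph (T : finType) (e : rel T) : Prop :=
  forall (x : T) (p : seq T),
    path e x p -> uniq (x :: p) -> (2 <= size p)%N -> ~~ e (last x p) x.

Definition is_tree (T : finType) (e : rel T) : Prop :=
  [/\ simple_graph e, (0 < #|T|)%N, (forall x y, connect e x y) & acyclic_graph e].

(* h_n(W(T)) = |Hom(W(T), Sym_n)|: by the presentation of the right-angled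
   Coxeter group, homomorphisms correspond exactly to assignments
   v |-> s_v in Sym_n with s_v^2 = 1 and s_v s_w = s_w s_v for adjacent v,w. *)
Definition hom_RACG_Sym (T : finType) (e : rel T) (n : nat) : nat :=
  #|[set f : {ffun T -> {perm 'I_n}} |
      [forall v, (f v * f v == 1)%g] &&
      [forall v, forall w, e v w ==> (f v * f w == f w * f v)%g]]|.

Definition induced_rel (T : finType) (e : rel T) (S : {set T}) : rel T :=
  fun x y => [&& x \in S, y \in S & e x y].

Definition induced_components (T : finType) (e : rel T) (S : {set T})
  : {set {set T}} :=
  [set [set y in S | connect (induced_rel e S) x y] | x in S].

Definition clique_collection (T : finType) (e : rel T) (S : {set T}) : bool :=
  [forall C in induced_components e S,
     forall x in C, forall y in C, (x != y) ==> e x y].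

Definition clique_weight (R : realType) (T : finType) (e : rel T)
  (S : {set T}) : R :=
  \sum_(C in induced_components e S) (1 - (2%:R ^- #|C|)).

(* gamma(T): max of w over all clique collections (the empty set is one,
   with weight 0, and all weights are >= 0, so 0 is a harmless base value). *)
Definition gammaT (R : realType) (T : finType) (e : rel T) : R :=
  \big[Num.max/0]_(S : {set T} | clique_collection e S) clique_weight R e S.

(* Main.v *)
Require Import Defs.
From HB Require Import structures.
From mathcomp Require Import all_boot all_order all_algebra all_fingroup.
From mathcomp Require Import all_classical all_reals all_analysis.
From mathcomp Require Import ring lra zify.
Import Order.TTheory GRing.Theory Num.Theory.
Set Implicit Arguments. Unset Strict Implicit. Unset Printing Implicit Defensive.

Definition orb4 n (s t : {perm 'I_n}) (x : 'I_n) : seq 'I_n := [:: x; s x; t x; s (t x)].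
Definition Dset n (s t : {perm 'I_n}) : {set 'I_n} :=
  [set x | (t x != x) && (t x != s x) && all (fun y : 'I_n => (x <= y)%N) (orb4 s t x)].
Definition Xset n (s t : {perm 'I_n}) : {set 'I_n} := [set x | t x == s x].
Definition Fixs n (s : {perm 'I_n}) : {set 'I_n} := [set x | s x == x].
Definition Movs n (s : {perm 'I_n}) : {set 'I_n} := [set x | s x != x].

Section Local.
Variables (n : nat) (s t : {perm 'I_n}).
Hypotheses (sK : forall x, s (s x) = x) (tK : forall x, t (t x) = x)
  (st : forall x, t (s x) = s (t x)).

Lemma orb_same y z : z \in orb4 s t y -> orb4 s t z =i orb4 s t y.
Proof.
rewrite !inE => /or4P [] /eqP -> w; rewrite !inE ?sK ?tK ?st ?sK ?tK.
- by [].
- by case: (w == s y); case: (w == y); case: (w == s (t y)); case: (w == t y).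
- by case: (w == s y); case: (w == y); case: (w == s (t y)); case: (w == t y).
- by case: (w == s y); case: (w == y); case: (w == s (t y)); case: (w == t y).
Qed.

Lemma nontriv_orb y z : t y != y -> t y != s y -> z \in orb4 s t y ->
  (t z != z) && (t z != s z).
Proof.
move=> h1 h2; rewrite !inE => /or4P [] /eqP ->; rewrite ?st ?sK ?tK;
  apply/andP; split; apply/eqP => E.
- by move/eqP: h1.
- by move/eqP: h2.
- by move/eqP: h1; apply; apply: (@perm_inj _ s).
- by move/eqP: h2; apply; rewrite -[t y]sK E.
- by move/eqP: h1; rewrite -E.
- by move/eqP: h2; apply; rewrite -[t y]sK -E.
- by move/eqP: h1; apply; apply: (@perm_inj _ s).
- by move/eqP: h2; rewrite -E.
Qed.

Lemma D_unique x x' z : x \in Dset s t -> x' \in Dset s t ->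
  z \in orb4 s t x -> z \in orb4 s t x' -> x = x'.
Proof.
move=> + + zx zx'; rewrite !inE => /andP [_ /allP hx] /andP [_ /allP hx'].
have E1 := orb_same zx; have E2 := orb_same zx'.
apply: val_inj; apply/eqP; rewrite eqn_leq; apply/andP; split.
- apply: hx; by rewrite -E1 E2 !inE eqxx.
- apply: hx'; by rewrite -E2 E1 !inE eqxx.
Qed.

Lemma D_cover y : t y != y -> t y != s y ->
  exists2 x, x \in Dset s t & y \in orb4 s t x.
Proof.
move=> h1 h2.
case: (@arg_minnP _ y (fun w => w \in orb4 s t y) (fun w : 'I_n => val w)).
  by rewrite inE eqxx.
move=> x Hx Hmin; exists x.
- have := nontriv_orb h1 h2 Hx; rewrite inE => ->; apply/allP => w.
  by rewrite (orb_same Hx) => /Hmin.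
- by rewrite (orb_same Hx) inE eqxx.
Qed.


Lemma orb_nontriv x z : x \in Dset s t -> z \in orb4 s t x -> t z != z.
Proof.
rewrite inE => /andP [/andP [h1 h2] _] zx.
by case/andP: (nontriv_orb h1 h2 zx).
Qed.

Lemma stx_neq x : s x != x -> s (t x) != t x.
Proof. by apply: contra => /eqP E; rewrite -st in E; apply/eqP/(perm_inj E). Qed.

Lemma card_bounds :
  [/\ 2 * #|Dset s t :&: Fixs s| <= #|Fixs s|,
      4 * #|Dset s t :&: Movs s| <= #|Movs s| &
      2 * #|Dset s t :&: Fixs s| + 4 * #|Dset s t :&: Movs s| <= #|Movs t|].
Proof.
set D := Dset s t.
pose f1 (p : 'I_n * bool) := if p.2 then p.1 else t p.1.
pose f2 (p : 'I_n * 'I_4) := nth p.1 (orb4 s t p.1) p.2.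
pose A1 := finset.setX (D :&: Fixs s) [set: bool].
pose A2 := finset.setX (D :&: Movs s) [set: 'I_4].
have cA1 : #|A1| = 2 * #|D :&: Fixs s| by rewrite cardsX cardsT card_bool mulnC.
have cA2 : #|A2| = 4 * #|D :&: Movs s| by rewrite cardsX cardsT card_ord mulnC.
have m1 p : f1 p \in orb4 s t p.1 by rewrite /f1; case: p.2; rewrite !inE eqxx ?orbT.
have m2 p : f2 p \in orb4 s t p.1 by rewrite /f2 mem_nth.
have uq x : x \in D -> s x != x -> uniq (orb4 s t x).
  rewrite inE => /andP [/andP [h1 h2] _] h3.
  have h4 := stx_neq h3.
  rewrite /= !inE !negb_or.
  apply/and4P; split; try apply/and3P; try split; try apply/andP; try split; try done.
  - by rewrite eq_sym.
  - by rewrite eq_sym.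
  - by apply: contra h2 => /eqP E; apply/eqP; rewrite {2}E sK.
  - by rewrite eq_sym.
  - by apply: contra h1 => /eqP /perm_inj E; rewrite -E.
  - by rewrite eq_sym.
have inj1 : {in A1 &, injective f1}.
  move=> [x b] [x' b'] /finset.setXP [/setIP [xD xF] _] /finset.setXP [/setIP [x'D _] _] E.
  have exx : x = x'.
    apply: (D_unique xD x'D (m1 (x, b))); rewrite E; exact: (m1 (x', b')).
  subst x'; move: E; rewrite /f1 /=.
  have := orb_nontriv xD (m1 (x, false)); rewrite /f1 /= tK => hh.
  case: b; case: b' => //= E.
  - by move: hh; rewrite -E eqxx.
  - by move: hh; rewrite E eqxx.
have inj2 : {in A2 &, injective f2}.
  move=> [x k] [x' k'] /finset.setXP [/setIP [xD xM] _] /finset.setXP [/setIP [x'D _] _] E.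
  have exx : x = x'.
    apply: (D_unique xD x'D (m2 (x, k))); rewrite E; exact: (m2 (x', k')).
  subst x'; move: E; rewrite /f2 /= => /eqP.
  rewrite nth_uniq ?(ltn_ord k) ?(ltn_ord k') //; first by move/eqP/val_inj=> ->.
  by apply: uq; rewrite // inE in xM.
have sub1 : f1 @: A1 \subset Fixs s.
  apply/fintype.subsetP => z /imsetP [[x b] /finset.setXP [/setIP [_]]]; rewrite !inE => /eqP xF _ ->.
  rewrite /f1; case: b => //=; first by rewrite xF.
  by rewrite -st xF.
have sub2 : f2 @: A2 \subset Movs s.
  apply/fintype.subsetP => z /imsetP [[x k] /finset.setXP [/setIP [_]]]; rewrite !inE => xM _ ->.
  have : f2 (x, k) \in orb4 s t x by exact: (m2 (x, k)).
  rewrite !inE => /or4P [] /eqP ->; rewrite ?sK //.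
  - by rewrite eq_sym.
  - exact: stx_neq.
  - by rewrite eq_sym stx_neq.
have sub3 : f1 @: A1 :|: f2 @: A2 \subset Movs t.
  apply/fintype.subsetP => z; rewrite !inE => /orP [] /imsetP [[x b] /finset.setXP [/setIP [xD _] _] ->].
  - exact: (orb_nontriv xD (m1 (x, b))).
  - exact: (orb_nontriv xD (m2 (x, b))).
have disj : f1 @: A1 :&: f2 @: A2 = finset.set0.
  apply/setP => z; rewrite !inE; apply/negP => /andP [].
  move=> /imsetP [[x b] /finset.setXP [/setIP [xD xF] _] ->].
  move=> /imsetP [[x' k] /finset.setXP [/setIP [x'D xM] _] E].
  have exx : x = x'.
    apply: (D_unique xD x'D (m1 (x, b))); rewrite E; exact: (m2 (x', k)).
  by subst x'; move: xF xM; rewrite !inE => ->.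
split.
- by rewrite -cA1 -(card_in_imset inj1) subset_leq_card.
- by rewrite -cA2 -(card_in_imset inj2) subset_leq_card.
- rewrite -cA1 -cA2 -(card_in_imset inj1) -(card_in_imset inj2).
  have := cardsUI (f1 @: A1) (f2 @: A2); rewrite disj cards0 addn0 => <-.
  exact: subset_leq_card.
Qed.

End Local.


Section Inj.
Variables (n : nat) (s t t' : {perm 'I_n}).
Hypotheses (sK : forall x, s (s x) = x) (tK : forall x, t (t x) = x)
  (st : forall x, t (s x) = s (t x)) (tK' : forall x, t' (t' x) = x)
  (st' : forall x, t' (s x) = s (t' x)).

Lemma on_orb x y : t x = t' x -> y \in orb4 s t x -> t y = t' y.
Proof.
move=> E; rewrite !inE => /or4P [] /eqP ->.
- exact: E.
- by rewrite st st' E.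
- by rewrite tK E tK'.
- by rewrite st tK E st' tK'.
Qed.

Lemma local_inj : Dset s t = Dset s t' -> Xset s t = Xset s t' ->
  {in Dset s t, forall x, t x = t' x} -> t = t'.
Proof.
move=> ED EX Eon; apply/permP => y.
case: (boolP ((t y != y) && (t y != s y))) => [/andP [h1 h2] | H].
  have [x xD yx] := D_cover sK tK st h1 h2.
  exact: (on_orb (Eon x xD) yx).
case: (boolP ((t' y != y) && (t' y != s y))) => [/andP [h1 h2] | H'].
  have [x xD yx] := D_cover sK tK' st' h1 h2.
  rewrite -ED in xD; have E := Eon x xD.
  apply: (on_orb E); by rewrite /orb4 E.
have HX : (t y == s y) = (t' y == s y).
  have : (y \in Xset s t) = (y \in Xset s t') by rewrite EX.
  by rewrite !inE.
move: H H'; rewrite !negb_and !negbK => H H'.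
case: (eqVneq (t y) (s y)) => E1.
  by move: HX; rewrite E1 eqxx => /esym/eqP ->.
move: HX; rewrite (negbTE E1) => /esym E2.
move: H H'; rewrite (negbTE E1) E2 !orbF => /eqP -> /eqP ->; done.
Qed.

End Inj.

Section Tree.
Variables (T : finType) (e : rel T) (r : T).
Hypotheses (esym : symmetric e) (eirr : irreflexive e)
  (conn : forall x y, connect e x y) (acyc : acyclic_graph e).

Definition ball k := iter k (fun A => A :|: [set y | [exists x in A, e x y]]) [set r].

Lemma ballS k : ball k.+1 = ball k :|: [set y | [exists x in ball k, e x y]].
Proof. by []. Qed.

Lemma ball_mono k m : ball k \subset ball (k + m).
Proof.
elim: m => [|m IH]; first by rewrite addn0.
by rewrite addnS ballS (fintype.subset_trans IH) // finset.subsetUl.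
Qed.

Lemma ball_nb k x y : x \in ball k -> e x y -> y \in ball k.+1.
Proof. by move=> xk exy; rewrite ballS !inE; apply/orP; right; apply/existsP; exists x; rewrite xk. Qed.

Lemma ball_path p x k : x \in ball k -> path e x p -> last x p \in ball (k + size p).
Proof.
elim: p x k => [|y p IH] x k xk /=; first by rewrite addn0.
case/andP => exy py; rewrite addnS -addSn; apply: IH py.
exact: ball_nb xk exy.
Qed.

Lemma ball_all v : v \in ball #|T|.
Proof.
have /connectP [p pp ->] := conn r v.
case: (shortenP pp) => p' pp' up' _.
have r0 : r \in ball 0 by rewrite /ball /= inE.
have h := ball_path r0 pp'; rewrite add0n in h.
have hs : size p' <= #|T|.
  have := max_card (mem (r :: p')); rewrite (card_uniqP up') /=.
  exact: ltnW.
have := ball_mono (size p') (#|T| - size p'); rewrite subnKC // => /fintype.subsetP; exact.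
Qed.


Lemma ex_ball v : exists k, v \in ball k.
Proof. by exists #|T|; exact: ball_all. Qed.

Definition dist v := ex_minn (ex_ball v).

Lemma dist_ball v : v \in ball (dist v).
Proof. by rewrite /dist; case: ex_minnP. Qed.

Lemma dist_min v k : v \in ball k -> dist v <= k.
Proof. by rewrite /dist; case: ex_minnP => m _ H /H. Qed.

Lemma dist_r : dist r = 0.
Proof. by apply/eqP; rewrite -leqn0; apply: dist_min; rewrite /ball /= inE. Qed.

Lemma dist0 v : dist v = 0 -> v = r.
Proof. by move=> h; have := dist_ball v; rewrite h /ball /= inE => /eqP. Qed.

Lemma dist_le x y : e x y -> dist y <= (dist x).+1.
Proof. by move=> exy; apply: dist_min; apply: ball_nb exy; exact: dist_ball. Qed.

Lemma dist_N v : dist v <= #|T|.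
Proof. exact/dist_min/ball_all. Qed.

Lemma ex_par v : v != r -> exists x, e x v && (dist x < dist v).
Proof.
move=> vr; case Ed: (dist v) => [|k].
  by move: vr; rewrite (dist0 Ed) eqxx.
have := dist_ball v; rewrite Ed ballS !inE => /orP [] H.
  by have := dist_min H; rewrite Ed ltnn.
case/existsP: H => x /andP [xk exv]; exists x; rewrite exv /=.
by rewrite ltnS dist_min.
Qed.

Definition par v := if v == r then r else odflt r [pick x | e x v && (dist x < dist v)].

Lemma par_spec v : v != r -> e (par v) v /\ (dist (par v)).+1 = dist v.
Proof.
move=> vr; rewrite /par (negbTE vr).
case: pickP => [x /andP [exv dx] | H] /=.
  split=> //; apply/eqP; rewrite eqn_leq dx /=.
  exact: dist_le exv.
by have [x Hx] := ex_par vr; move: (H x); rewrite Hx.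
Qed.

Lemma par_e v : v != r -> e (par v) v.
Proof. by case/par_spec. Qed.

Lemma par_dist v : v != r -> (dist (par v)).+1 = dist v.
Proof. by case/par_spec. Qed.

Lemma dist_ind (P : T -> Prop) : P r -> (forall v, v != r -> P (par v) -> P v) ->
  forall v, P v.
Proof.
move=> Pr IH v.
have : dist v <= dist v by [].
elim: (dist v) {-2}v => [|k IHk] w hw.
  by rewrite leqn0 in hw; rewrite (dist0 (eqP hw)).
case: (eqVneq w r) => [-> //|wr].
apply: (IH _ wr); apply: IHk; by rewrite -ltnS (par_dist wr).
Qed.

Definition pe a b := ((a != r) && (par a == b)) || ((b != r) && (par b == a)).

Lemma pe_sym : symmetric pe.
Proof. by move=> a b; rewrite /pe orbC. Qed.

Lemma pe_e a b : pe a b -> e a b.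
Proof.
case/orP => /andP [ar /eqP <-]; last exact: par_e.
by rewrite esym; exact: par_e.
Qed.

Lemma pe_conn_r v : connect pe v r.
Proof.
elim/dist_ind: v => [|v vr IH]; first exact: connect0.
apply: connect_trans IH; apply: connect1; by rewrite /pe vr eqxx.
Qed.

Lemma tree_edge x y : e x y -> pe x y.
Proof.
move=> exy.
have c : connect pe x y.
  apply: connect_trans (pe_conn_r x) _.
  by rewrite (sym_connect_sym pe_sym) pe_conn_r.
case/connectP: c => p pp Ey; subst y.
move: exy; case: (shortenP pp) => p' pp' up' _.
case: p' pp' up' => [|z [|w p'']] pp' up' exy /=.
- by move: exy; rewrite /= eirr.
- by move: pp'; rewrite /= andbT.
- apply/negPn/negP => npe.
  have := acyc (sub_path pe_e pp') up' isT.
  by rewrite esym exy.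
Qed.


Definition child u v := (u != r) && (par u == v).

Lemma child_dist u v : child u v -> dist u = (dist v).+1.
Proof. by case/andP => ur /eqP <-; rewrite (par_dist ur). Qed.

Fixpoint BP k v : nat * bool :=
  if k is k'.+1 then
    let b := #|[set u | child u v && ((BP k' u).1 <= 1)]| in
    (b, (b == 0) || ((b == 1) &&
        [forall u, (child u v && ((BP k' u).1 <= 1)) ==> ~~ (BP k' u).2]))
  else (0, true).

Lemma BP_stab k v : #|T| < dist v + k -> BP k.+1 v = BP k v.
Proof.
elim: k v => [|k IH] v h.
  by have := dist_N v; rewrite leqNgt -(addn0 (dist v)) h.
have E u : child u v -> BP k.+1 u = BP k u.
  by move=> cu; apply: IH; rewrite (child_dist cu) addSn -addnS.
have ES : [set u | child u v && ((BP k.+1 u).1 <= 1)] =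
          [set u | child u v && ((BP k u).1 <= 1)].
  by apply/setP => u; rewrite !inE; case cu: (child u v) => //; rewrite E.
have EF : [forall u, (child u v && ((BP k.+1 u).1 <= 1)) ==> ~~ (BP k.+1 u).2] =
          [forall u, (child u v && ((BP k u).1 <= 1)) ==> ~~ (BP k u).2].
  by apply: eq_forallb => u; case cu: (child u v) => //; rewrite E.
by rewrite [LHS]/= ES EF.
Qed.

Definition B v := BP #|T|.+1 v.
Definition bb v := (B v).1.
Definition pp v := (B v).2.

Lemma B_fix v : bb v = #|[set u | child u v && (bb u <= 1)]| /\
  pp v = (bb v == 0) || ((bb v == 1) &&
        [forall u, (child u v && (bb u <= 1)) ==> ~~ pp u]).
Proof.
rewrite /bb /pp.
have -> : B v = BP #|T|.+2 v by rewrite /B (BP_stab (k := #|T|.+1)) // addnS ltnS leq_addl.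
by [].
Qed.

Lemma bb_fix v : bb v = #|[set u | child u v && (bb u <= 1)]|.
Proof. by case: (B_fix v). Qed.

Lemma pp_fix v : pp v = (bb v == 0) || ((bb v == 1) &&
        [forall u, (child u v && (bb u <= 1)) ==> ~~ pp u]).
Proof. by case: (B_fix v). Qed.

Lemma sum_par (F : T -> nat) :
  \sum_v (if (v != r) && (bb v <= 1) then F (par v) else 0) = \sum_v bb v * F v.
Proof.
rewrite -big_mkcond /= (partition_big par predT) //=.
apply: eq_bigr => w _; rewrite bb_fix -sum_nat_const.
apply: eq_big => [v|v]; first by rewrite !inE /child; case: (v != r); case: (bb v <= 1); case: (par v == w).
by case/andP => _ /eqP ->.
Qed.

Lemma count_exp (n : nat) (m j i : T -> nat) :
  (forall v, m v <= n) ->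
  (forall v, v != r -> [/\ 2 * j v + m (par v) <= n, 4 * i v <= m (par v) &
                          2 * j v + 4 * i v <= m v]) ->
  i r = 0 -> 2 * j r <= m r ->
  4 * (\sum_v (j v + i v)) <= n * \sum_v (2 - bb v).
Proof.
move=> mn H ir jr.
have Ev v : 4 * (j v + i v) + (if (v != r) && (bb v <= 1) then m (par v) else 0)
            <= n * (2 - bb v) + bb v * m v.
  case: (eqVneq v r) => [-> | vr] /=.
    rewrite ir; have := mn r; case: (bb r) => [|[|b]]; nia.
  have [h1 h2 h3] := H v vr; have := mn v.
  case: (bb v) => [|[|b]] /=; nia.
have : \sum_v (4 * (j v + i v) + (if (v != r) && (bb v <= 1) then m (par v) else 0))
   <= \sum_v (n * (2 - bb v) + bb v * m v) by apply: leq_sum => v _; exact: Ev.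
rewrite !big_split /= sum_par -!big_distrr /= leq_add2r.
move=> h; lia.
Qed.

Definition topv v := (v == r) || (1 < bb (par v)).
Definition Sset := [set v | (bb v <= 1) && (pp v || topv v)].
Definition nbrS x := [exists y in Sset, e x y].
Definition lch v := [set u | child u v && (bb u <= 1)].

Lemma L_sub v : v \in Sset -> bb v <= 1.
Proof. by rewrite inE => /andP []. Qed.

Lemma L_childS u v : child u v -> bb v <= 1 -> (u \in Sset) = (bb u <= 1) && pp u.
Proof.
move=> /andP [ur /eqP pu] bv; rewrite inE /topv (negbTE ur) pu /=.
by rewrite ltnNge bv orbF.
Qed.

Lemma L_pp_child v u : pp v -> u \in lch v -> ~~ pp u.
Proof.
rewrite pp_fix => /orP [/eqP b0|/andP [_ /forallP H]] uc.
  by move: uc; rewrite -/(lch v) in b0; rewrite bb_fix -/(lch v) in b0; move/eqP: b0; rewrite cards_eq0 => /eqP ->; rewrite inE.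
by move: (H u) uc; rewrite inE => /implyP.
Qed.

Lemma L_npp v : bb v <= 1 -> ~~ pp v ->
  exists u, [/\ child u v, bb u <= 1, pp u & lch v = [set u]].
Proof.
move=> bv; rewrite pp_fix negb_or negb_and => /andP [b0 H].
have b1 : bb v == 1 by move: bv b0; case: (bb v) => [|[|]].
rewrite b1 /= negb_forall in H; case/existsP: H => w; rewrite negb_imply negbK => /andP [wc pw].
have /cards1P [u Eu] : #|lch v| == 1 by rewrite -bb_fix.
have : w \in lch v by rewrite inE.
rewrite Eu inE => /eqP ww; subst w; case/andP: wc => cw lw.
by exists u.
Qed.

Lemma L_nbr_pp x : x \in Sset -> pp x -> nbrS x = (x != r) && (par x \in Sset).
Proof.
move=> xS px; apply/existsP/idP => [[y /andP [yS exy]] | /andP [xr pS]].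
  case/orP: (tree_edge exy) => /andP [H1 /eqP H2]; first by rewrite H1 H2 yS.
  have cy : child y x by apply/andP; split => //; apply/eqP.
  move: yS; rewrite (L_childS cy (L_sub xS)) => /andP [ly py].
  have := L_pp_child px (u := y); rewrite /lch inE cy ly => /(_ isT).
  by rewrite py.
by exists (par x); rewrite pS esym par_e.
Qed.

Lemma N1 x : x \in Sset -> #|[set y in Sset | e x y]| <= 1.
Proof.
move=> xS; case: (boolP (pp x)) => px.
  apply: (@leq_trans #|[set par x]|); last by rewrite cards1.
  apply: subset_leq_card; apply/fintype.subsetP => y /setIdP [yS exy].
  case/orP: (tree_edge exy) => /andP [H1 /eqP H2]; first by rewrite H2 set11.
  have cy : child y x by apply/andP; split => //; apply/eqP.
  move: yS; rewrite (L_childS cy (L_sub xS)) => /andP [ly py].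
  have := L_pp_child px (u := y); rewrite /lch inE cy ly => /(_ isT).
  by rewrite py.
apply: (@leq_trans #|lch x|); last by rewrite -bb_fix (L_sub xS).
apply: subset_leq_card; apply/fintype.subsetP => y /setIdP [yS exy].
case/orP: (tree_edge exy) => /andP [H1 /eqP H2].
  move: xS; rewrite inE (negbTE px) /topv (negbTE H1) H2 /=.
  by rewrite ltnNge (L_sub yS) andbF.
rewrite inE (L_sub yS) andbT; apply/andP; split => //; exact/eqP.
Qed.

Definition cred x := if x \in Sset then (if nbrS x then 3 else 4) else 0.
Definition rho x := if x \in Sset then (if nbrS x then 1 else 0) else 2.

Lemma sum_lch v (F : T -> nat) :
  \sum_(u | child u v && (bb u <= 1)) F u = \sum_(u in lch v) F u.
Proof. by apply: eq_bigl => u; rewrite inE. Qed.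

Lemma top_nbr v : pp v -> v \in Sset -> topv v -> ~~ nbrS v.
Proof.
move=> pv vS; rewrite (L_nbr_pp vS pv) /topv => /orP [/eqP -> | H].
  by rewrite eqxx.
by rewrite andbC; apply/negP => /andP [/L_sub]; rewrite leqNgt H.
Qed.

Lemma local v : bb v <= 1 ->
  2 * (2 - bb v) + \sum_(u | child u v && (bb u <= 1)) rho u <=
  cred v + (if topv v then 0 else rho v).
Proof.
move=> bv; rewrite sum_lch.
case: (boolP (pp v)) => pv.
  have vS : v \in Sset by rewrite inE bv pv.
  have -> : \sum_(u in lch v) rho u = \sum_(u in lch v) 2.
    apply: eq_bigr => u; rewrite inE => /andP [cu lu].
    have := L_pp_child pv (u := u); rewrite inE cu lu => /(_ isT) npu.
    by rewrite /rho (L_childS cu bv) lu (negbTE npu).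
  rewrite sum_nat_const -bb_fix /cred /rho vS.
  case: (boolP (topv v)) => tv.
    by rewrite (negbTE (top_nbr pv vS tv)); move: bv; case: (bb v) => [|[|]].
  by case: (nbrS v); move: bv; case: (bb v) => [|[|]].
have [u [cu lu pu Eu]] := L_npp bv pv.
have b1 : bb v = 1 by rewrite bb_fix -/(lch v) Eu cards1.
rewrite Eu big_set1 b1.
have uS : u \in Sset by rewrite (L_childS cu bv) lu pu.
have nu : nbrS u = (v \in Sset).
  rewrite (L_nbr_pp uS pu); case/andP: cu => ur /eqP ->; by rewrite ur.
case: (boolP (topv v)) => tv.
  have vS : v \in Sset by rewrite inE bv tv orbT.
  have nv : nbrS v.
    apply/existsP; exists u; rewrite uS /=; case/andP: cu => ur /eqP <-.
    exact: par_e.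
  by rewrite /cred /rho vS nv uS nu vS.
have vS : v \in Sset = false by rewrite inE (negbTE pv) (negbTE tv) andbF.
by rewrite /cred /rho vS uS nu vS.
Qed.

Lemma reindex :
  \sum_(v | bb v <= 1) \sum_(u | child u v && (bb u <= 1)) rho u =
  \sum_(v | bb v <= 1) (if topv v then 0 else rho v).
Proof.
rewrite (exchange_big_dep (fun u => bb u <= 1)) /=; last by move=> v u _ /andP [].
apply: eq_bigr => u lu.
case: (eqVneq u r) => [-> | ur].
  by rewrite /topv eqxx /=; apply: big1 => v; rewrite /child eqxx /= andbF.
rewrite /topv (negbTE ur) /= ltnNge.
case: (boolP (bb (par u) <= 1)) => lp /=.
  rewrite (big_pred1 (par u)) // => v; rewrite /child ur lu andbT /= eq_sym.
  by case: (v =P par u) => [->|_]; rewrite ?lp ?andbF.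
apply: big1 => v; rewrite /child ur lu /= andbT => /andP [lv /eqP pv].
by move: lp; rewrite pv lv.
Qed.

Lemma credit : 2 * \sum_v (2 - bb v) <= \sum_v cred v.
Proof.
rewrite big_distrr /=.
rewrite (bigID (fun v => bb v <= 1)) /= [X in _ <= X](bigID (fun v => bb v <= 1)) /=.
rewrite [X in _ + X <= _]big1 ?addn0; last first.
  move=> v; rewrite -ltnNge => h; lia.
apply: leq_trans (leq_addr _ _).
rewrite -(leq_add2r (\sum_(v | bb v <= 1) (if topv v then 0 else rho v))).
rewrite -{1}reindex -!big_split /=.
by apply: leq_sum => v; exact: local.
Qed.

End Tree.

Section Weight.
Variables (T : finType) (e : rel T) (S : {set T}).
Hypotheses (esym : symmetric e) (eirr : irreflexive e)
  (HS : forall x, x \in S -> #|[set y in S | e x y]| <= 1).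

Let Rl := induced_rel e S.
Let Nb x := [set y in S | e x y].

Lemma Nb_eq x y z : x \in S -> y \in Nb x -> z \in Nb x -> y = z.
Proof. move=> xS yN zN; have /card_le1_eqP H := HS xS; by move: (H y z yN zN) => /= ->. Qed.

Lemma compE x : x \in S -> [set y in S | connect Rl x y] = x |: Nb x.
Proof.
move=> xS; apply/setP => z; rewrite !inE.
apply/andP/orP => [[zS /connectP [p pp ->]] | [/eqP -> | /andP [zS exz]]].
- suff : forall a, (a == x) || (a \in Nb x) -> path Rl a p ->
          (last a p == x) || ((last a p \in S) && e x (last a p)).
    by move/(_ x); rewrite eqxx => /(_ isT pp) /orP.
  elim: p {pp zS} => [|b p IH] a ha /=.
    by move: ha; rewrite inE.
  case/andP => /and3P [aS bS eab] pb; apply: IH pb.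
  case/orP: ha => [/eqP ax | aN]; first by rewrite inE bS -ax eab orbT.
  have xN : x \in Nb a by rewrite inE xS esym; move: aN; rewrite inE => /andP [].
  have bN : b \in Nb a by rewrite inE bS eab.
  by rewrite (Nb_eq aS xN bN) eqxx.
- by split=> //; exact: connect0.
- split=> //; apply: connect1; by rewrite /Rl /induced_rel xS zS exz.
Qed.


Lemma Rl_sym : symmetric Rl.
Proof. by move=> a b; rewrite /Rl /induced_rel andbCA esym. Qed.

Lemma comp_part : finset.partition (induced_components e S) S.
Proof.
apply: (@equivalence_partitionP _ (connect Rl) S) => x y z _ _ _; split.
  exact: connect0.
by move=> cxy; apply: (same_connect (sym_connect_sym Rl_sym) cxy).
Qed.

Lemma compC C : C \in induced_components e S -> exists2 x, x \in S & C = x |: Nb x.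
Proof. by case/imsetP => x xS ->; exists x => //; rewrite compE. Qed.

Lemma cc_S : clique_collection e S.
Proof.
apply/forallP => C; apply/implyP => /compC [x xS ->].
apply/forallP => a; apply/implyP => aC; apply/forallP => b; apply/implyP => bC.
move: aC bC; rewrite !inE => /orP [/eqP -> | /andP [aS ea]] /orP [/eqP -> | /andP [bS eb]].
- by rewrite eqxx.
- by rewrite eb implybT.
- by rewrite esym ea implybT.
- have aN : a \in Nb x by rewrite inE aS ea.
  have bN : b \in Nb x by rewrite inE bS eb.
  by rewrite (Nb_eq xS aN bN) eqxx.
Qed.

Local Open Scope ring_scope.

Lemma weightE (R : realType) : clique_weight R e S =
  \sum_(x in S) ((if [exists y in S, e x y] then 3 else 4)%:R / 8%:R).
Proof.
rewrite /clique_weight (set_partition_big _ comp_part).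
apply: eq_bigr => C /compC [x xS ->].
have : (#|Nb x| <= 1)%N by exact: HS.
rewrite leq_eqVlt ltnS leqn0 => /orP [/cards1P [y Ey] | /eqP E00].
- have yN : y \in Nb x by rewrite Ey set11.
  have yS : y \in S by move: yN; rewrite inE => /andP [].
  have exy : e x y by move: yN; rewrite inE => /andP [].
  have xy : x != y by apply: contraTneq exy => ->; rewrite eirr.
  rewrite Ey big_setU1 ?inE //= big_set1 cardsU1 inE xy cards1 /=.
  have -> : [exists y0 in S, e x y0] by apply/fintype.existsP; exists y; rewrite yS exy.
  have -> : [exists y0 in S, e y y0] by apply/fintype.existsP; exists x; rewrite xS esym exy.
  by rewrite /=; field.
- have E0 := cards0_eq E00.
  rewrite E0 finset.setU0 big_set1 cards1.
  have -> : [exists y0 in S, e x y0] = false.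
    case: fintype.existsP => // -[y /andP [yS exy]].
    have : y \in Nb x by rewrite inE yS exy.
    by rewrite E0 inE.
  by rewrite /=; field.
Qed.

End Weight.

Section Main.
Variables (T : finType) (e : rel T) (r : T) (conn : forall x y, connect e x y).
Hypotheses (esym : symmetric e) (eirr : irreflexive e) (acyc : acyclic_graph e).
Variables (n : nat) (x0 : 'I_n).

Local Notation pr := (par r conn).

Definition HomS := [set f : {ffun T -> {perm 'I_n}} |
      [forall v, (f v * f v == 1)%g] &&
      [forall v, forall w, e v w ==> (f v * f w == f w * f v)%g]].

Lemma hom_inv f : f \in HomS -> forall v x, f v (f v x) = x.
Proof.
rewrite inE => /andP [/forallP H _] v x.
by have := congr1 (fun p : {perm 'I_n} => p x) (eqP (H v)); rewrite permM perm1.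
Qed.

Lemma hom_comm f v w : f \in HomS -> e v w -> forall x, f w (f v x) = f v (f w x).
Proof.
rewrite inE => /andP [_ /forallP H] evw x.
have := H v => /forallP /(_ w) /implyP /(_ evw) /eqP E.
by have := congr1 (fun p : {perm 'I_n} => p x) E; rewrite !permM.
Qed.

Definition sg (f : {ffun T -> {perm 'I_n}}) v : {perm 'I_n} :=
  if v == r then 1%g else f (pr v).

Lemma sg_inv f v : f \in HomS -> forall x, sg f v (sg f v x) = x.
Proof. by move=> hf x; rewrite /sg; case: ifP => _; rewrite ?perm1 ?hom_inv. Qed.

Lemma sg_comm f v : f \in HomS -> forall x, f v (sg f v x) = sg f v (f v x).
Proof.
move=> hf x; rewrite /sg; case: ifPn => vr; first by rewrite !perm1.
exact: (hom_comm hf (par_e conn vr)).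
Qed.

Definition enc (f : {ffun T -> {perm 'I_n}}) :=
  ([set p : T * 'I_n | p.2 \in Dset (sg f p.1) (f p.1)],
   [set p : T * 'I_n | p.2 \in Xset (sg f p.1) (f p.1)],
   [ffun p : T * 'I_n => if p.2 \in Dset (sg f p.1) (f p.1) then f p.1 p.2 else x0]).

Lemma enc_inj : {in HomS &, injective enc}.
Proof.
move=> f f' hf hf' [E1 E2 E3].
have step v : sg f v = sg f' v -> f v = f' v.
  move=> Es.
  have ED : Dset (sg f v) (f v) = Dset (sg f' v) (f' v).
    apply/setP => x; have : ((v, x) \in [set p : T * 'I_n | p.2 \in Dset (sg f p.1) (f p.1)]) = ((v, x) \in [set p : T * 'I_n | p.2 \in Dset (sg f' p.1) (f' p.1)]) by rewrite E1.
    by rewrite !inE /=.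
  have EX : Xset (sg f v) (f v) = Xset (sg f' v) (f' v).
    apply/setP => x; have : ((v, x) \in [set p : T * 'I_n | p.2 \in Xset (sg f p.1) (f p.1)]) = ((v, x) \in [set p : T * 'I_n | p.2 \in Xset (sg f' p.1) (f' p.1)]) by rewrite E2.
    by rewrite !inE /=.
  rewrite Es in ED EX.
  apply: (local_inj (s := sg f' v)) => //.
  - exact: sg_inv.
  - exact: hom_inv.
  - by move=> x; rewrite -Es; apply: sg_comm.
  - exact: hom_inv.
  - exact: sg_comm.
  - move=> x xD; have E3' := E3; move/ffunP: E3' => /(_ (v, x)); rewrite !ffunE /=.
    have xD1 : x \in Dset (sg f v) (f v) by rewrite Es.
    have xD2 : x \in Dset (sg f' v) (f' v) by rewrite -ED.
    by rewrite xD1 xD2.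
apply/ffunP => v; elim/(@dist_ind T e r conn): v => [|v vr IH].
  by apply: step; rewrite /sg eqxx.
by apply: step; rewrite /sg (negbTE vr) IH.
Qed.


Lemma card_pairset (A : T -> {set 'I_n}) :
  #|[set p : T * 'I_n | p.2 \in A p.1]| = \sum_v #|A v|.
Proof.
rewrite -sum1_card (eq_bigr (fun v => \sum_(x in A v) 1)); last by move=> v _; rewrite sum1_card.
rewrite pair_big_dep /=; apply: eq_bigl => p; by rewrite inE.
Qed.

Lemma Movs_C (s : {perm 'I_n}) : Movs s = ~: Fixs s.
Proof. by apply/setP => x; rewrite !inE. Qed.

Lemma cardFM (s : {perm 'I_n}) : #|Fixs s| + #|Movs s| = n.
Proof. by rewrite Movs_C cardsC card_ord. Qed.

Lemma Movs1 : Movs (1%g : {perm 'I_n}) = finset.set0.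
Proof. by apply/setP => x; rewrite !inE perm1 eqxx. Qed.

Definition Kb := (n * \sum_v (2 - bb r conn v)) %/ 4.

Lemma encD_card f : f \in HomS -> #|(enc f).1.1| <= Kb.
Proof.
move=> hf; rewrite /= (card_pairset (fun v => Dset (sg f v) (f v))) /Kb leq_divRL // mulnC.
pose D v := Dset (sg f v) (f v).
pose j v := #|D v :&: Fixs (sg f v)|.
pose i v := #|D v :&: Movs (sg f v)|.
have Dji v : #|D v| = j v + i v by rewrite /j /i Movs_C -finset.setDE cardsID.
rewrite (eq_bigr (fun v => j v + i v)); last by move=> v _; exact: Dji.
apply: (count_exp (m := fun v => #|Movs (f v)|)).
- by move=> v; have := cardFM (f v); lia.
- move=> v vr.
  have [h1 h2 h3] := card_bounds (sg_inv v hf) (hom_inv hf v) (sg_comm v hf).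
  have hs : sg f v = f (pr v) by rewrite /sg (negbTE vr).
  have := cardFM (sg f v); rewrite hs in h1 h2 h3 * => hc.
  rewrite /j /i /D hs; split; lia.
- have [_ h2 _] := card_bounds (sg_inv r hf) (hom_inv hf r) (sg_comm r hf).
  move: h2; rewrite /i /D /sg eqxx Movs1 cards0; lia.
- have [_ _ h3] := card_bounds (sg_inv r hf) (hom_inv hf r) (sg_comm r hf).
  by move: h3; rewrite /j /D; lia.
Qed.

Lemma card_setset (X : finType) : #|{set X}| = 2 ^ #|X|.
Proof. by rewrite -[LHS]cardsT -powersetT card_powerset cardsT. Qed.

Lemma card_HomS : #|HomS| <= 2 ^ (#|T| * n) * 2 ^ (#|T| * n) * n ^ Kb.
Proof.
have n0 : 0 < n by case: (n) x0 => [[]|].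
pose Img := [set t : ({set T * 'I_n} * {set T * 'I_n}) * {ffun T * 'I_n -> 'I_n} |
   (#|t.1.1| <= Kb) && (t.2 \in pffun_on x0 t.1.1 [set: 'I_n])].
have sub : enc @: HomS \subset Img.
  apply/fintype.subsetP => t /imsetP [f hf ->]; rewrite inE encD_card //=.
  apply/pffun_onP; split; last by move=> y _; rewrite inE.
  apply/fintype.subsetP => p; rewrite inE ffunE.
  by case: ifP => [pD _ | _ /eqP //]; rewrite inE.
have : #|HomS| <= #|Img|.
  by rewrite -(card_in_imset enc_inj); exact: subset_leq_card.
move/leq_trans; apply.
rewrite -sum1_card.
have -> : \sum_(t in Img) 1 = \sum_a \sum_g (if (a, g) \in Img then 1 else 0).
  by rewrite pair_big /= big_mkcond; apply: eq_bigr => [[a g]] _.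
apply: (@leq_trans (\sum_(a : {set T * 'I_n} * {set T * 'I_n}) n ^ Kb)).
  apply: leq_sum => a _.
  case: (leqP #|a.1| Kb) => ha.
    rewrite -big_mkcond /= (eq_bigl (fun g => g \in pffun_on x0 a.1 [set: 'I_n])); last first.
      by move=> g; rewrite inE /= ha.
    rewrite sum1_card card_pffun_on cardsT card_ord.
    by rewrite leq_pexp2l.
  by rewrite big1 // => g _; rewrite inE /= leqNgt ha.
rewrite sum_nat_const card_prod !card_setset card_prod card_ord.
by [].
Qed.

Local Open Scope ring_scope.
Lemma Q_le_gamma (R : realType) :
  ((\sum_v (2 - bb r conn v))%N%:R : R) <= 4%:R * gammaT R e.
Proof.
pose S := Sset r conn.
have HS : forall x, x \in S -> (#|[set y in S | e x y]| <= 1)%N.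
  exact: (@N1 T e r esym eirr conn acyc).
have cw := weightE esym eirr HS R.
have h := @credit T e r esym eirr conn acyc.
have ce : (\sum_v cred r conn v = \sum_(x in S) (if [exists y in S, e x y] then 3 else 4))%N.
  by rewrite [RHS]big_mkcond; apply: eq_bigr => v _; rewrite /cred.
rewrite ce in h.
have g1 : clique_weight R e S <= gammaT R e.
  rewrite /gammaT; apply: (le_bigmax_seq 0%R S (clique_collection e) (clique_weight R e)).
    exact: mem_index_enum.
  exact: cc_S esym HS.
have h2 : ((2 * \sum_v (2 - bb r conn v))%N%:R : R) <= 8%:R * clique_weight R e S.
  have h' : ((2 * \sum_v (2 - bb r conn v))%N%:R : R) <=
     (\sum_(x in S) (if [exists y in S, e x y] then 3 else 4))%N%:R by rewrite ler_nat.
  apply: (le_trans h'); rewrite natr_sum cw mulr_sumr; apply: ler_sum => x _.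
  by rewrite mulrCA mulfV ?mulr1 // pnatr_eq0.
rewrite natrM in h2.
lra.
Qed.

End Main.


Unset Implicit Arguments. Set Strict Implicit.
Local Open Scope ring_scope.

Theorem mainTheorem8 (R : realType) (T : finType) (e : rel T) (n : nat) :
  is_tree e -> (1 <= n)%N ->
  ((hom_RACG_Sym e n)%:R : R) <=
    (n%:R ^+ (2 * #|T|)) * (4%:R ^+ (#|T| * n)) *
    powR n%:R (gammaT R e * n%:R).
Proof.
case=> [[esym eirr] T0 conn acyc] n1.
have [r _] : exists r : T, true by case/card_gt0P: T0 => x _; exists x.
have x0 : 'I_n by case: n n1 => // n' _; exact: ord0.
have hc := card_HomS r conn x0.
have hq := Q_le_gamma r conn esym eirr acyc R.
set Q := (\sum_v (2 - bb r conn v))%N in hq.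
set K := Kb r conn n in hc.
have hK : (K * 4 <= n * Q)%N by rewrite /K /Kb leq_trunc_div.
have hom : hom_RACG_Sym e n = #|HomS e n| by [].
rewrite hom.
have n1R : (1 : R) <= n%:R by rewrite ler1n.
have hKR : (K%:R : R) <= gammaT R e * n%:R.
  have : ((K * 4)%N%:R : R) <= (n * Q)%N%:R by rewrite ler_nat.
  rewrite !natrM => h.
  have n0 : (0 : R) <= n%:R by lra.
  nra.
have hp : (n%:R ^+ K : R) <= powR n%:R (gammaT R e * n%:R).
  rewrite -powR_mulrn; last lra.
  exact: ler_powR.
have h1 : ((#|HomS e n|)%:R : R) <= 4%:R ^+ (#|T| * n) * n%:R ^+ K.
  rewrite -(ler_nat R) in hc; apply: (le_trans hc).
  by rewrite !natrM !natrX -exprMn -natrM.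
apply: (le_trans h1).
have a1 : (1 : R) <= n%:R ^+ (2 * #|T|) by rewrite exprn_ege1.
have a2 : (0 : R) <= 4%:R ^+ (#|T| * n) by rewrite exprn_ge0.
have a3 : (0 : R) <= n%:R ^+ K by rewrite exprn_ge0 //; lra.
have P0 : (0 : R) <= powR n%:R (gammaT R e * n%:R) by apply: (le_trans a3 hp).
have BP0 := mulr_ge0 a2 P0.
have h2 : (4%:R ^+ (#|T| * n) * n%:R ^+ K : R) <= 4%:R ^+ (#|T| * n) * powR n%:R (gammaT R e * n%:R).
  exact: ler_wpM2l.
apply: (le_trans h2); rewrite -mulrA.
set BP := _ * powR _ _ in BP0 *.
nra.
Qed.
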